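(* Let $\xi>0$ with $\xi\neq1$, $\omega_0>0$, and define $\omega^2(k)=\frac{\omega_0^2}{\xi^2}\big((\xi-\cos k)^2+\sin^2 k\big)$, $\Omega_0=\frac{\omega_0}{\xi}|1-\xi|$, $\Omega_D=\frac{\omega_0}{\xi}(1+\xi)$, and for an integer $n$ and real $\omega$ with $\omega^2(k)\ne\omega^2$ for all $k$, $$\mathcal G_n(\omega)=\frac{1}{2\pi}\int_0^{2\pi}\frac{e^{ikn}}{\omega^2(k)-\omega^2}\,dk .$$ Then for $0\le\omega<\Omega_0$ and every integer $n$, $$\mathcal G_n(\omega)=\frac{1}{\sqrt{(\Omega_D^2-\omega^2)(\Omega_0^2-\omega^2)}}\left(\frac{\Omega_D^2+\Omega_0^2-2\omega^2-2\sqrt{(\Omega_D^2-\omega^2)(\Omega_0^2-\omega^2)}}{\Omega_D^2-\Omega_0^2}\right)^{|n|},$$ which is real-valued.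
   Context: $\mathcal G_n$ is the frequency-domain lattice Green's function (entry with $|p-q|=n$) of the exponentially graded linear chain (masses $m_0\xi^{2p}$, spring constants $m_0\xi^{2p}\omega_0^2$) in the limit of infinitely many particles, in the symmetrized variables $y_p=\xi^pu_p$; $\Omega_0$ and $\Omega_D$ are the lowest and highest eigenfrequencies. *)

(* Defs.v *)
From Stdlib Require Import Reals ZArith.
From Coquelicot Require Import Coquelicot.
Open Scope R_scope.

Definition omega2 (xi omega0 k : R) : R :=
  omega0 ^ 2 / xi ^ 2 * ((xi - cos k) ^ 2 + (sin k) ^ 2).

Definition Omega_0 (xi omega0 : R) : R := omega0 / xi * Rabs (1 - xi).
Definition Omega_D (xi omega0 : R) : R := omega0 / xi * (1 + xi).

Definition expikn (k : R) (n : Z) : C := (cos (k * IZR n), sin (k * IZR n)).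

Definition Gfun (xi omega0 : R) (n : Z) (w : R) : C :=
  Cmult (RtoC (/ (2 * PI)))
    (@RInt C_R_CompleteNormedModule (fun k : R => Cdiv (expikn k n) (RtoC (omega2 xi omega0 k - w ^ 2)))
          0 (2 * PI)).

(* Main.v *)
Require Import Defs.
From Stdlib Require Import Reals ZArith.
From Coquelicot Require Import Coquelicot.
From Stdlib Require Import Lra Lia Psatz.
Open Scope R_scope.


Section G.
Variables A B : R.
Hypothesis hB : 0 < B.
Hypothesis hAB : B < A.
Let SS := sqrt (A^2 - B^2).
Let r := (A - SS) / B.

Lemma S_pos : 0 < SS.
Proof. unfold SS; apply sqrt_lt_R0; nra. Qed.
Lemma S_sq : SS * SS = A^2 - B^2.
Proof. unfold SS; rewrite sqrt_sqrt; nra. Qed.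
Lemma r_pos : 0 < r.
Proof. unfold r. pose proof S_pos; pose proof S_sq. apply Rdiv_lt_0_compat; nra. Qed.
Lemma r_lt1 : r < 1.
Proof. unfold r. pose proof S_pos; pose proof S_sq.
  apply Rlt_div_l; try lra. nra. Qed.
Lemma r_eq : B * r ^ 2 - 2 * A * r + B = 0.
Proof. unfold r. pose proof S_sq. field_simplify; try lra. assert (B^2-A^2+SS^2 = 0) by nra. rewrite H0. field. lra. Qed.
Lemma den_pos k : 0 < A - B * cos k.
Proof. pose proof (COS_bound k). nra. Qed.

Definition F0 k := (k + 2 * atan (r * sin k / (1 - r * cos k))) / SS.

Lemma I0 : is_RInt (fun k => / (A - B * cos k)) 0 (2*PI) (2 * PI / SS).
Proof.
  assert (H: 2 * PI / SS = minus (F0 (2*PI)) (F0 0)).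
  { unfold F0, minus, plus, opp; simpl. rewrite sin_2PI, sin_0, !Rmult_0_r, !Rdiv_0_l, atan_0. field. pose proof S_pos; lra. }
  rewrite H. apply (is_RInt_derive (V:=R_CompleteNormedModule) F0 (fun k => / (A - B * cos k))).
  - intros x _. unfold F0.
    pose proof r_pos. pose proof r_lt1. pose proof (COS_bound x).
    assert (0 < 1 - r * cos x) by nra.
    auto_derive. lra.
    assert (hA0 : A = B*r + SS) by (unfold r; field; lra).
    assert (h2: 2*r*SS = B*(1-r^2)).
    { pose proof S_sq as Hq. rewrite hA0 in Hq. apply Rmult_eq_reg_l with B; [nra| lra]. }
    assert (hS : SS = B * (1 - r^2) / (2 * r)) by (rewrite <- h2; field; lra).
    assert (hA : A = B * (1 + r^2) / (2 * r)) by (rewrite hA0, hS; field; lra).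
    assert (hd1 : 0 < 1 - 2 * r * cos x + r^2) by nra.
    rewrite hS, hA.
    assert (hr2 : 0 < 1 - r^2) by nra.
    field_simplify.
    + replace (sin x ^ 2) with (1 - cos x ^ 2) by (pose proof (sin2_cos2 x); unfold Rsqr in *; nra). field. split.
      * apply Rgt_not_eq; nra.
      * match goal with |- ?e <> 0 => replace e with (B*((1-r^2)*(1-2*r*cos x+r^2))) by ring end.
        apply Rgt_not_eq; apply Rmult_lt_0_compat; [lra| apply Rmult_lt_0_compat; lra].
    + split; try lra. nra.
    + repeat split; try lra. nra.
  - intros x _. apply (ex_derive_continuous (V:=R_NormedModule) (fun k => / (A - B * cos k))). auto_derive.
    pose proof (den_pos x). lra.
Qed.

Definition fc (m : nat) (k : R) := cos (k * INR m) / (A - B * cos k).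
Definition Ic m := RInt (fc m) 0 (2*PI).

Lemma exR (f : R -> R) : (forall x, ex_derive f x) -> ex_RInt f 0 (2*PI).
Proof. intros H. apply (ex_RInt_continuous (V:=R_CompleteNormedModule)). intros z _.
  apply (ex_derive_continuous (V:=R_NormedModule) f). apply H. Qed.

Lemma ex_fc m : ex_RInt (fc m) 0 (2*PI).
Proof. apply exR. intros x. unfold fc. auto_derive. pose proof (den_pos x); lra. Qed.

Lemma cos_zero_gen c : 0 < c -> sin (2*PI*c) = 0 -> is_RInt (V:=R_CompleteNormedModule) (fun k => cos (k * c)) 0 (2*PI) 0.
Proof.
  intros hm hs.
  assert (H: 0 = minus ((fun k => sin (k * c) / c) (2*PI)) ((fun k => sin (k * c) / c) 0)).
  { unfold minus, plus, opp; cbn -[sin Rdiv].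
    rewrite hs, Rmult_0_l, sin_0. field. lra. }
  assert (Hd : is_RInt (fun k => cos (k * c)) 0 (2*PI) (minus ((fun k => sin (k * c) / c) (2*PI)) ((fun k => sin (k * c) / c) 0))).
  { apply (is_RInt_derive (V:=R_CompleteNormedModule) (fun k => sin (k * c) / c)).
  - intros x _. auto_derive. lra. field. lra.
  - intros x _. apply (ex_derive_continuous (V:=R_NormedModule) (fun k => cos (k * c))). auto_derive. easy. }
  cbv beta in Hd, H. rewrite <- H in Hd. exact Hd.
Qed.

Lemma cos_zero m : is_RInt (V:=R_CompleteNormedModule) (fun k => cos (k * INR (S m))) 0 (2*PI) 0.
Proof.
  apply cos_zero_gen. apply lt_0_INR; apply Nat.lt_0_succ.
  replace (2 * PI * INR (S m)) with (0 + 2 * INR (S m) * PI) by ring.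
  rewrite sin_period. apply sin_0.
Qed.

Lemma Ic0 : Ic 0 = 2 * PI / SS.
Proof. unfold Ic. rewrite <- (is_RInt_unique _ _ _ _ I0). apply RInt_ext.
  intros x _. unfold fc. simpl. rewrite Rmult_0_r, cos_0. field. pose proof (den_pos x); lra. Qed.

Lemma Ic1 : B * Ic 1 = A * Ic 0 - 2 * PI.
Proof.
  unfold Ic.
  pose proof (RInt_correct (V:=R_CompleteNormedModule) _ _ _ (ex_fc 0)) as h0.
  pose proof (RInt_correct (V:=R_CompleteNormedModule) _ _ _ (ex_fc 1)) as h1.
  pose proof (is_RInt_scal _ _ _ B _ h1) as hB1.
  pose proof (is_RInt_minus _ _ _ _ _ _ (is_RInt_scal _ _ _ A _ h0) (is_RInt_const (V:=R_CompleteNormedModule) 0 (2*PI) 1)) as hA0.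
  apply (is_RInt_ext _ (fun y => scal B (fc 1 y))) in hA0.
  2:{ intros x _. unfold fc, scal, minus, plus, opp; simpl. unfold mult; simpl.
      rewrite Rmult_0_r, Rmult_1_r, cos_0. field. pose proof (den_pos x); lra. }
  apply (is_RInt_unique (V:=R_CompleteNormedModule)) in hB1. apply (is_RInt_unique (V:=R_CompleteNormedModule)) in hA0.
  assert (E := eq_trans (eq_sym hB1) hA0).
  unfold scal, minus, plus, opp in E; simpl in E. unfold mult in E; simpl in E.
  lra.
Qed.

Lemma Ic_rec m : B * (Ic (S (S m)) + Ic m) = 2 * A * Ic (S m).
Proof.
  unfold Ic.
  pose proof (RInt_correct (V:=R_CompleteNormedModule) _ _ _ (ex_fc m)) as h0.
  pose proof (RInt_correct (V:=R_CompleteNormedModule) _ _ _ (ex_fc (S m))) as h1.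
  pose proof (RInt_correct (V:=R_CompleteNormedModule) _ _ _ (ex_fc (S (S m)))) as h2.
  pose proof (is_RInt_scal _ _ _ B _ (is_RInt_plus _ _ _ _ _ _ h2 h0)) as hL.
  pose proof (is_RInt_minus _ _ _ _ _ _ (is_RInt_scal _ _ _ (2*A) _ h1) (is_RInt_scal _ _ _ 2 _ (cos_zero m))) as hR.
  apply (is_RInt_ext _ (fun y => scal B (plus (fc (S (S m)) y) (fc m y)))) in hR.
  2:{ intros x _. unfold fc, scal, minus, plus, opp; cbn -[INR cos Rdiv]. unfold mult; cbn -[INR cos Rdiv].
      rewrite !S_INR.
      replace (x * (INR m + 1 + 1)) with (x * (INR m + 1) + x) by ring.
      replace (x * INR m) with (x * (INR m + 1) - x) by ring.
      rewrite cos_plus, cos_minus. field. pose proof (den_pos x); lra. }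
  apply (is_RInt_unique (V:=R_CompleteNormedModule)) in hL. apply (is_RInt_unique (V:=R_CompleteNormedModule)) in hR.
  assert (E := eq_trans (eq_sym hL) hR).
  unfold scal, minus, plus, opp in E; simpl in E. unfold mult in E; simpl in E.
  lra.
Qed.

Lemma Ic_val m : Ic m = 2 * PI / SS * r ^ m.
Proof.
  assert (Hp : forall m, Ic m = 2 * PI / SS * r ^ m /\ Ic (S m) = 2 * PI / SS * r ^ (S m)).
  { pose proof S_pos. pose proof r_eq.
    induction m0 as [|m0 [IH1 IH2]].
    - split. rewrite Ic0. simpl; ring.
      pose proof Ic1 as H1. rewrite Ic0 in H1. apply Rmult_eq_reg_l with B; [|lra].
      rewrite H1. unfold r. rewrite pow_1. field. lra.
    - split. exact IH2.
      pose proof (Ic_rec m0) as H1. rewrite IH1, IH2 in H1.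
      apply Rmult_eq_reg_l with B; [|lra].
      replace (B * Ic (S (S m0))) with (2 * A * (2 * PI / SS * r ^ S m0) - B * (2 * PI / SS * r ^ m0)) by lra.
      replace (r ^ S (S m0)) with (r^m0 * r^2) by (rewrite <- pow_add; f_equal; lia).
      replace (r ^ S m0) with (r^m0 * r^1) by (rewrite <- pow_add; f_equal; lia).
      assert (E: B*(2*PI/SS*(r^m0*r^2)) - (2*A*(2*PI/SS*(r^m0*r^1)) - B*(2*PI/SS*r^m0)) = 2*PI/SS*r^m0*(B*r^2 - 2*A*r + B)) by ring.
      rewrite H0, Rmult_0_r in E. lra. }
  exact (proj1 (Hp m)).
Qed.

Lemma Js_zero t : sin (2*PI*t) = 0 -> cos (2*PI*t) = 1 ->
  is_RInt (V:=R_CompleteNormedModule) (fun k => sin (k * t) / (A - B * cos k)) 0 (2*PI) 0.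
Proof.
  intros hs hc.
  set (f := fun k => sin (k * t) / (A - B * cos k)).
  assert (ex : ex_RInt (V:=R_CompleteNormedModule) f 0 (2*PI)).
  { apply exR. intros x. unfold f. auto_derive. pose proof (den_pos x); lra. }
  pose proof (RInt_correct (V:=R_CompleteNormedModule) _ _ _ ex) as h.
  set (J := RInt f 0 (2 * PI)) in h.
  pose proof (is_RInt_swap _ _ _ _ h) as h'.
  assert (h2 : is_RInt (V:=R_CompleteNormedModule) f (-1 * 0 + 2*PI) (-1 * (2*PI) + 2*PI) (opp J)).
  { replace (-1 * 0 + 2*PI) with (2*PI) by ring. replace (-1 * (2*PI) + 2*PI) with 0 by ring. exact h'. }
  pose proof (is_RInt_comp_lin _ _ _ _ _ _ h2) as h3.
  apply (is_RInt_ext _ f) in h3.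
  2:{ intros x _. unfold f, scal; simpl. unfold mult; simpl.
      replace ((-1 * x + 2 * PI) * t) with (2*PI*t - x * t) by ring.
      replace (-1 * x + 2 * PI) with (- x + 2 * INR 1 * PI) by (simpl; ring).
      rewrite cos_period, cos_neg, sin_minus, hs, hc. field. pose proof (den_pos x); lra. }
  apply (is_RInt_unique (V:=R_CompleteNormedModule)) in h. apply (is_RInt_unique (V:=R_CompleteNormedModule)) in h3.
  assert (E := eq_trans (eq_sym h) h3).
  unfold opp in E; simpl in E.
  assert (HJ0 : J = 0) by lra.
  assert (HJ : is_RInt (V:=R_CompleteNormedModule) f 0 (2*PI) J) by exact (RInt_correct (V:=R_CompleteNormedModule) _ _ _ ex).
  rewrite HJ0 in HJ. exact HJ.
Qed.
End G.

Lemma IZR_cases n : IZR n = INR (Z.abs_nat n) \/ IZR n = - INR (Z.abs_nat n).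
Proof.
  destruct n; simpl.
  - left; reflexivity.
  - left; rewrite INR_IPR; reflexivity.
  - right; rewrite INR_IPR; reflexivity.
Qed.

Lemma trig_int n : sin (2*PI*IZR n) = 0 /\ cos (2*PI*IZR n) = 1.
Proof.
  destruct (IZR_cases n) as [e|e]; rewrite e.
  - replace (2 * PI * INR (Z.abs_nat n)) with (0 + 2 * INR (Z.abs_nat n) * PI) by ring.
    rewrite sin_period, cos_period, sin_0, cos_0. split; reflexivity.
  - replace (2 * PI * - INR (Z.abs_nat n)) with (- (0 + 2 * INR (Z.abs_nat n) * PI)) by ring.
    rewrite sin_neg, cos_neg, sin_period, cos_period, sin_0, cos_0. split; lra.
Qed.

Lemma cos_abs k n : cos (k * IZR n) = cos (k * INR (Z.abs_nat n)).
Proof.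
  destruct (IZR_cases n) as [e|e]; rewrite e; [reflexivity|].
  replace (k * - INR (Z.abs_nat n)) with (- (k * INR (Z.abs_nat n))) by ring.
  apply cos_neg.
Qed.

Theorem mainTheorem2 (xi omega0 : R) (n : Z) (w : R) :
  0 < xi -> xi <> 1 -> 0 < omega0 ->
  0 <= w -> w < Omega_0 xi omega0 ->
  let OD := Omega_D xi omega0 in
  let O0 := Omega_0 xi omega0 in
  let S := sqrt ((OD ^ 2 - w ^ 2) * (O0 ^ 2 - w ^ 2)) in
  Gfun xi omega0 n w =
  RtoC (/ S * ((OD ^ 2 + O0 ^ 2 - 2 * w ^ 2 - 2 * S) / (OD ^ 2 - O0 ^ 2))
               ^ (Z.abs_nat n)).
Proof.
  intros hxi hxi1 hw0 hw hwO OD O0 S'.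
  assert (hOD : OD^2 = omega0^2/xi^2*(1+xi)^2) by (unfold OD, Omega_D; field; lra).
  assert (hO0 : O0^2 = omega0^2/xi^2*(1-xi)^2).
  { unfold O0, Omega_0. rewrite Rpow_mult_distr, pow2_abs. field; lra. }
  pose (A := (OD^2+O0^2)/2 - w^2). pose (B := (OD^2 - O0^2)/2).
  assert (hBv : B = 2 * omega0^2 / xi) by (unfold B; rewrite hOD, hO0; field; lra).
  assert (hB : 0 < B).
  { rewrite hBv. apply Rdiv_lt_0_compat; nra. }
  assert (hAB : B < A).
  { assert (w^2 < O0^2) by (fold O0 in hwO; nra). unfold A, B. lra. }
  assert (hden : forall k, omega2 xi omega0 k - w^2 = A - B * cos k).
  { intros k. unfold omega2. rewrite hBv. unfold A. rewrite hOD, hO0.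
    replace (sin k ^ 2) with (1 - cos k ^ 2) by (pose proof (sin2_cos2 k); unfold Rsqr in *; nra).
    field. lra. }
  assert (hS : S' = sqrt (A^2 - B^2)). { unfold S'; f_equal; unfold A, B. field. }
  assert (hR : (OD ^ 2 + O0 ^ 2 - 2 * w ^ 2 - 2 * S') / (OD ^ 2 - O0 ^ 2) = (A - sqrt (A^2 - B^2)) / B).
  { rewrite hS. unfold A, B. field. unfold B in hB. lra. }
  rewrite hR, hS. unfold Gfun.
  match goal with |- context [RInt ?g 0 (2*PI)] =>
    assert (HI : RInt (V:=C_R_CompleteNormedModule) g 0 (2*PI) = (Ic A B (Z.abs_nat n), 0)) end.
  { apply (is_RInt_unique (V:=C_R_CompleteNormedModule)).
    apply (is_RInt_fct_extend_pair (U:=R_NormedModule) (V:=R_NormedModule)).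
    - apply (is_RInt_ext (fc A B (Z.abs_nat n))).
      + intros x _. unfold fc, Cdiv, Cmult, Cinv, expikn, RtoC; simpl.
        rewrite hden, cos_abs. pose proof (den_pos A B hB hAB x). field. lra.
      + exact (RInt_correct (V:=R_CompleteNormedModule) _ _ _ (ex_fc A B hB hAB _)).
    - apply (is_RInt_ext (fun k => sin (k * IZR n) / (A - B * cos k))).
      + intros x _. unfold Cdiv, Cmult, Cinv, expikn, RtoC; simpl.
        rewrite hden. pose proof (den_pos A B hB hAB x). field. lra.
      + destruct (trig_int n). apply Js_zero; assumption. }
  rewrite HI, (Ic_val A B hB hAB).
  pose proof (S_pos A B hB hAB). pose proof PI_RGT_0.
  unfold Cmult, RtoC; cbn [fst snd]. f_equal; [field; lra | ring].
Qed.
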